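(* Let $P$ be a shrub on a finite set $I$. Then the connected components of $P$ are exactly the parts of the partition $\pi_{f_P}$ of $I$.
   Context: A shrub $P$ on a finite set $I$ is a set $E$ of edges (unordered pairs of distinct elements of $I$) with a height function $h_P:I\to\mathbb{N}$; $j$ covers $i$ if $\{i,j\}\in E$ and $h_P(j)=h_P(i)+1$. Axioms: (1) edges join vertices whose heights differ by $1$; (2) every vertex of positive height covers some vertex; (3) no four distinct $a,b,c,d$ with $a$ covering $b$ and $c$, $c$ covering $d$, $\{b,d\}\notin E$; (4) no five distinct $a,b,c,d,e$ with $a$ covering $c,d$, $b$ covering $d,e$, $\{a,e\}\notin E$, $\{b,c\}\notin E$. Connected components are those of the graph $(I,E)$. A vertex is ramified if it covers at least two distinct vertices; two ramified vertices are equivalent if they cover the same set of vertices; $\operatorname{Ram}(P)$ is the set of equivalence classes, and for $r\in\operatorname{Ram}(P)$, $r^-$ is the common set of vertices covered by elements of $r$. For $S\subseteq I$, $\langle S\rangle_P$ is the set of $j\in I$ such that every descending path from $j$ (each vertex covering the next) to a vertex of height $0$ meets $S$. $P\setminus\langle r\rangle_P$ is the restriction of $P$ to $I\setminus\langle r\rangle_P$. With $u[S]=\sum_{k\in S}u_k$, $$f_P=\frac{1}{\prod_{i\in I}u[\langle\{i\}\rangle_P]}\prod_{r\in\operatorname{Ram}(P)}\frac{u[\langle r^-\rangle_{P\setminus\langle r\rangle_P}]}{u[\langle r^-\rangle_P]}\in\mathbb{Q}(u_i:i\in I).$$ For a rational function $f$ in the variables $(u_i)_{i\in I}$, written in lowest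 terms, $\pi_f$ is the partition of $I$ into classes of the equivalence relation generated by: $i\sim j$ if some irreducible factor of the denominator of $f$ involves both $u_i$ and $u_j$. *)

(* Defs.v *)
From HB Require Import structures.
From mathcomp Require Import all_boot all_order all_algebra.
From mathcomp Require Import boolp.
From mathcomp Require Import mpoly.
From Stdlib Require Import Relations.
Set Implicit Arguments. Unset Strict Implicit. Unset Printing Implicit Defensive.
Import GRing.Theory.
Local Open Scope ring_scope.

Notation "x %:F" := (@FracField.tofrac _ x).

(* The edge set E is a symmetric irreflexive relation (= a set of         *)
(* unordered pairs of distinct elements); h is the height function.       *)

Section Shrub.
Variables (n : nat) (E : rel 'I_n) (h : 'I_n -> nat).

Definition covers (j i : 'I_n) : bool := E i j && (h j == (h i).+1)%N.

Definition is_shrub : Prop :=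
  (forall i j, E i j = E j i) /\ (forall i, ~~ E i i) /\
  (* (1) *) (forall i j, E i j -> h i = (h j).+1 \/ h j = (h i).+1) /\
  (* (2) *) (forall i, (0 < h i)%N -> exists j, covers i j) /\
  (* (3) *) (forall a b c d : 'I_n, uniq [:: a; b; c; d] ->
              covers a b -> covers a c -> covers c d -> E b d) /\
  (* (4) *) (forall a b c d e : 'I_n, uniq [:: a; b; c; d; e] ->
                  covers a c -> covers a d -> covers b d -> covers b e ->
                  E a e \/ E b c).

Definition covered (v : 'I_n) : {set 'I_n} := [set w | covers v w].

Definition ramified (v : 'I_n) : bool := (1 < #|covered v|)%N.

Definition Ram : {set {set 'I_n}} :=
  [set [set w | ramified w && (covered w == covered v)] | v in [set v | ramified v]].

(* r^- : the common set of vertices covered by the elements of r *)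
Definition rminus (r : {set 'I_n}) : {set 'I_n} := \bigcup_(v in r) covered v.

Definition desc_path (V : {set 'I_n}) (j : 'I_n) (p : seq 'I_n) : bool :=
  (j \in V) && path (fun x y => [&& x \in V, y \in V & covers x y]) j p.

(* < S >_{P|V} : the j (in V) such that every descending path (in the
   restriction of P to V) from j to a vertex of height 0 meets S. *)
Definition gen (V S : {set 'I_n}) : {set 'I_n} :=
  [set j in V | `[< forall p : seq 'I_n, desc_path V j p ->
                     h (last j p) = 0%N -> has (mem S) (j :: p) >]].

Local Notation F := {fraction {mpoly rat[n]}}.

Definition usum (S : {set 'I_n}) : F := \sum_(k in S) ('X_k : {mpoly rat[n]})%:F.

Definition fP : F :=
  (\prod_(i : 'I_n) usum (gen setT [set i]))^-1 *
  \prod_(r in Ram) (usum (gen (~: gen setT r) (rminus r)) /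
                    usum (gen setT (rminus r))).

End Shrub.

Section PiF.
Variable n : nat.
Local Notation P := {mpoly rat[n]}.
Local Notation F := {fraction {mpoly rat[n]}}.

Definition mdvd (a b : P) : Prop := exists c : P, b = a * c.

Definition mirreducible (p : P) : Prop :=
  [/\ p != 0, p \isn't a GRing.unit &
      forall a b : P, p = a * b -> a \is a GRing.unit \/ b \is a GRing.unit].

Definition lowest_terms (f : F) (N D : P) : Prop :=
  [/\ D != 0, f = N%:F / D%:F &
      forall c : P, mdvd c N -> mdvd c D -> c \is a GRing.unit].

Definition involves (p : P) (i : 'I_n) : Prop :=
  exists m : 'X_{1..n}, p@_m != 0 /\ (0 < m i)%N.

Definition denom_rel (f : F) (i j : 'I_n) : Prop :=
  exists N D : P, lowest_terms f N D /\
    exists p : P, [/\ mirreducible p, mdvd p D, involves p i & involves p j].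

(* pi_f, as the equivalence relation generated by denom_rel f *)
Definition pi_rel (f : F) : relation 'I_n := clos_refl_sym_trans 'I_n (denom_rel f).

End PiF.

(* Main.v *)
From HB Require Import structures.
Require Import Defs.
From mathcomp Require Import all_boot all_order all_algebra.
From mathcomp Require Import boolp mpoly fraction.
From Stdlib Require Import Relations.
Set Implicit Arguments. Unset Strict Implicit. Unset Printing Implicit Defensive.
Import GRing.Theory.

Local Open Scope ring_scope.

Section Alg.
Variable n : nat.
Local Notation P := {mpoly rat[n]}.

Definition ell (S : {set 'I_n}) : P := \sum_(k in S) 'X_k.

Definition mprime (l : P) : Prop :=
  [/\ l != 0, l \isn't a GRing.unit &
      forall a b : P, mdvd l (a * b) -> mdvd l a \/ mdvd l b].

Lemma mdvd_refl (a : P) : mdvd a a.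
Proof. by exists 1; rewrite mulr1. Qed.

Lemma mdvd_trans (a b c : P) : mdvd a b -> mdvd b c -> mdvd a c.
Proof. by move=> [x ->] [y ->]; exists (x * y); rewrite mulrA. Qed.

Lemma mdvd_mulr (a b c : P) : mdvd a b -> mdvd a (b * c).
Proof. by move=> [x ->]; exists (x * c); rewrite mulrA. Qed.

Lemma mdvd_mull (a b c : P) : mdvd a b -> mdvd a (c * b).
Proof. by rewrite mulrC; apply: mdvd_mulr. Qed.

Lemma meval_ell v S : meval v (ell S) = \sum_(k in S) v k.
Proof. rewrite /ell raddf_sum; apply: eq_bigr => k _; exact: mevalXU. Qed.

Lemma unit_meval (a : P) v : a \is a GRing.unit -> meval v a != 0.
Proof.
case/unitrP => y [h1 _]; apply/eqP => h0.
by have := congr1 (meval v) h1; rewrite mevalM h0 mulr0 meval1 => /eqP; rewrite eq_sym oner_eq0.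
Qed.

Lemma ell_neq0 S : S != set0 -> ell S != 0.
Proof.
case/set0Pn => k kS; apply/eqP => h.
have := congr1 (meval (fun i => (i == k)%:R)) h.
rewrite meval_ell meval0 (bigD1 k) //= eqxx big1 ?addr0 => [|i /andP[_ /negbTE ->] //].
by move/eqP; rewrite oner_eq0.
Qed.

Lemma ell_nunit S : ell S \isn't a GRing.unit.
Proof.
apply/negP => /(unit_meval (fun _ => 0)); rewrite meval_ell big1 ?eqxx //.
Qed.

Section Sigma.
Variables (S : {set 'I_n}) (k : 'I_n).
Hypothesis kS : k \in S.
Let q : P := ell (S :\ k).
Let lq : n.-tuple P := [tuple (if i == k then - q else 'X_i) | i < n].
Let sig (a : P) : P := a \mPo lq.

Lemma sigD a b : sig (a + b) = sig a + sig b. Proof. exact: raddfD. Qed.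
Lemma sigM a b : sig (a * b) = sig a * sig b. Proof. exact: rmorphM. Qed.
Lemma sigC c : sig c%:MP = c%:MP. Proof. exact: comp_mpolyC. Qed.

Lemma sigX i : sig 'X_i = if i == k then - q else 'X_i.
Proof. by rewrite /sig comp_mpolyXU -tnth_nth tnth_mktuple. Qed.

Lemma ellE : ell S = 'X_k + q.
Proof. by rewrite /ell (bigD1 k) //=; congr (_ + _); apply: eq_bigl => i; rewrite !inE andbC. Qed.

Lemma sig_q : sig q = q.
Proof.
rewrite /sig /q /ell raddf_sum; apply: eq_bigr => i; rewrite !inE => /andP[/negbTE ik _].
by move: (sigX i); rewrite ik.
Qed.

Lemma sig_ell : sig (ell S) = 0.
Proof. by rewrite ellE sigD sigX eqxx sig_q addNr. Qed.

Lemma dvd_sig a : mdvd (ell S) (a - sig a).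
Proof.
pose Q (x : P) := mdvd (ell S) (x - sig x).
have QD a1 b1 : Q a1 -> Q b1 -> Q (a1 + b1).
  move=> [x hx] [y hy]; exists (x + y); rewrite sigD.
  by rewrite mulrDr -hx -hy opprD addrACA.
have QM a1 b1 : Q a1 -> Q b1 -> Q (a1 * b1).
  move=> [x hx] [y hy]; exists (x * b1 + sig a1 * y).
  rewrite sigM mulrDr mulrA -hx mulrCA -hy mulrBl mulrBr addrA subrK. reflexivity.
have QC c : Q c%:MP by exists 0; rewrite sigC subrr mulr0.
have QX i : Q 'X_i.
  rewrite /Q sigX; case: eqP => [->|_]; last by exists 0; rewrite subrr mulr0.
  by exists 1; rewrite mulr1 opprK ellE.
suff H : forall b, Q b by apply: (H a).
move=> b; rewrite (mpolyE b).
apply: (big_ind Q); [by rewrite -mpolyC0; apply: (QC) | exact: (QD) |].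
move=> m _; rewrite -mul_mpolyC; apply: (QM) => //.
rewrite mpolyXE_id.
apply: (big_ind Q); [by rewrite -mpolyC1; apply: (QC) | exact: (QM) |].
move=> i _; elim: (m i) => [|e IH]; first by rewrite expr0 -mpolyC1; apply: (QC).
by rewrite exprS; apply: (QM).
Qed.

Lemma ell_dvd_sig a : mdvd (ell S) a <-> sig a = 0.
Proof.
split; first by move=> [c ->]; rewrite sigM sig_ell mul0r.
by move=> h; have := dvd_sig a; rewrite h subr0.
Qed.

End Sigma.

Lemma ell_prime S : S != set0 -> mprime (ell S).
Proof.
move=> /[dup] Sn /set0Pn[k kS]; split; [exact: ell_neq0 | exact: ell_nunit |].
move=> a b; rewrite !(ell_dvd_sig kS) rmorphM /= => /eqP; rewrite mulf_eq0.
by case/orP => /eqP; [left|right].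
Qed.


Lemma mul1_unit (a b : P) : a * b = 1 -> a \is a GRing.unit.
Proof. by move=> h; apply/unitrP; exists b; rewrite mulrC h. Qed.

Lemma dvd_unit (a b : P) : mdvd a b -> b \is a GRing.unit -> a \is a GRing.unit.
Proof. by move=> [c ->]; rewrite unitrM => /andP[]. Qed.

Lemma ell_irr S : S != set0 -> mirreducible (ell S).
Proof.
move=> /ell_prime [nz nu pr]; split => // a b e.
have : mdvd (ell S) (a * b) by rewrite -e; apply: mdvd_refl.
case/pr => -[c ec].
  right; apply: (@mul1_unit _ c); apply: (mulfI nz).
  by rewrite mulr1 {2}e ec -mulrA [c * b]mulrC.
left; apply: (@mul1_unit _ c); apply: (mulfI nz).
by rewrite mulr1 {2}e ec mulrCA.
Qed.

Lemma sum_ind (S : {set 'I_n}) t : \sum_(k in S) ((k == t)%:R : rat) = (t \in S)%:R.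
Proof.
case tS: (t \in S).
  by rewrite (bigD1 t) //= eqxx big1 ?addr0 // => k /andP[_ /negbTE ->].
by rewrite big1 // => k kS; case: eqP kS tS => // -> ->.
Qed.

Lemma ell_dvd_ell S T : T != set0 -> mdvd (ell S) (ell T) -> S = T.
Proof.
move=> /set0Pn[t tT] [c ec].
have ev (v : 'I_n -> rat) : \sum_(k in S) v k = 0 -> \sum_(k in T) v k = 0.
  by move=> h; rewrite -(meval_ell v T) ec mevalM meval_ell h mul0r.
apply/setP => x; apply/idP/idP => [xS|xT]; last first.
  apply/negPn/negP => xS.
  have := ev (fun k => (k == x)%:R); rewrite !sum_ind xT (negbTE xS) => /(_ erefl) /eqP.
  by rewrite oner_eq0.
apply/negPn/negP => xT.
have tx : t != x by apply: contraNneq xT => <-.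
have := ev (fun k => (k == t)%:R - (k == x)%:R).
rewrite !sumrB !sum_ind (negbTE xT) xS tT subr0.
have tS : t \in S by apply/negPn/negP => tS; have := ev (fun k => (k == t)%:R); rewrite !sum_ind tT (negbTE tS) => /(_ erefl) /eqP; rewrite oner_eq0.
by rewrite tS subrr => /(_ erefl) /eqP; rewrite oner_eq0.
Qed.

Definition nonemp (Ls : seq {set 'I_n}) := forall S, S \in Ls -> S != set0.

Lemma prime_dvd_prod p (Ls : seq {set 'I_n}) : mprime p ->
  mdvd p (\prod_(S <- Ls) ell S) -> exists2 S, S \in Ls & mdvd p (ell S).
Proof.
move=> [nz nu pr]; elim: Ls => [|S Ls IH].
  by rewrite big_nil => /dvd_unit /(_ (unitr1 _)); rewrite (negbTE nu).
rewrite big_cons => /pr [h|/IH [T TL hT]]; first by exists S; rewrite ?mem_head.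
by exists T; rewrite // in_cons TL orbT.
Qed.

Lemma irr_dvd_prod p (Ls : seq {set 'I_n}) : mirreducible p -> nonemp Ls ->
  mdvd p (\prod_(S <- Ls) ell S) -> exists2 S, S \in Ls & mdvd p (ell S).
Proof.
move=> [nz nu irr]; elim: Ls => [|S Ls IH] ne.
  by rewrite big_nil => /dvd_unit /(_ (unitr1 _)); rewrite (negbTE nu).
have neS : S != set0 by apply: ne; rewrite mem_head.
have ne' : nonemp Ls by move=> T TL; apply: ne; rewrite in_cons TL orbT.
rewrite big_cons => -[q eq].
have [nzS nuS prS] := ell_prime neS.
have : mdvd (ell S) (p * q) by rewrite -eq; apply: mdvd_mulr; apply: mdvd_refl.
case/prS => -[c ec].
  exists S; first by rewrite mem_head.
  case: (irr _ _ ec) => [u|u]; first by rewrite u in nuS.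
  by exists c^-1; rewrite ec -mulrA mulrV // mulr1.
case: IH => // [|T TL hT]; last by exists T; rewrite // in_cons TL orbT.
exists c; apply: (mulfI nzS); by rewrite eq ec mulrCA.
Qed.

Definition coprimeP (a b : P) := forall c : P, mdvd c a -> mdvd c b -> c \is a GRing.unit.

Lemma coprime_prods (Ls Ms : seq {set 'I_n}) : nonemp Ls -> nonemp Ms ->
  (forall S T, S \in Ls -> T \in Ms -> S != T) ->
  coprimeP (\prod_(S <- Ls) ell S) (\prod_(S <- Ms) ell S).
Proof.
move=> neL neM dif c; elim: Ls neL dif c => [|S Ls IH] neL dif c.
  by rewrite big_nil => /dvd_unit /(_ (unitr1 _)).
have neS : S != set0 by apply: neL; rewrite mem_head.
have ne' : nonemp Ls by move=> T TL; apply: neL; rewrite in_cons TL orbT.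
rewrite big_cons => -[q eq] cM.
have [nzS nuS prS] := ell_prime neS.
have : mdvd (ell S) (c * q) by rewrite -eq; apply: mdvd_mulr; apply: mdvd_refl.
case/prS => hS.
  have [T TM hT] := prime_dvd_prod (ell_prime neS) (mdvd_trans hS cM).
  have := dif S T (mem_head _ _) TM; rewrite (ell_dvd_ell (neM _ TM) hT) eqxx //.
case: hS => q' eq'.
apply: (IH ne') => //; first by move=> S' T S'L; apply: dif; rewrite in_cons S'L orbT.
exists q'; apply: (mulfI nzS); by rewrite eq eq' mulrCA.
Qed.

Lemma lowest_dvd (Ls : seq {set 'I_n}) (N D X : P) : nonemp Ls -> coprimeP N D ->
  N * \prod_(S <- Ls) ell S = X * D -> mdvd D (\prod_(S <- Ls) ell S).
Proof.
elim: Ls D X => [|S Ls IH] D X ne cop.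
  rewrite big_nil mulr1 => eN.
  have := cop D; rewrite eN => /(_ (mdvd_mull _ (mdvd_refl _)) (mdvd_refl _)) Du.
  by exists D^-1; rewrite mulrV.
have neS : S != set0 by apply: ne; rewrite mem_head.
have ne' : nonemp Ls by move=> T TL; apply: ne; rewrite in_cons TL orbT.
have [nzS nuS prS] := ell_prime neS.
rewrite big_cons => e.
have : mdvd (ell S) (X * D) by rewrite -e; apply: mdvd_mull; apply: mdvd_mulr; apply: mdvd_refl.
case/prS => -[c ec].
  have e' : N * \prod_(S <- Ls) ell S = c * D.
    by apply: (mulfI nzS); rewrite mulrCA e ec mulrA.
  by apply: mdvd_mull; apply: (IH D c).
have cop' : coprimeP N c.
  by move=> d dN dc; apply: cop => //; rewrite ec; apply: mdvd_mull.
have e' : N * \prod_(S <- Ls) ell S = X * c.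
  by apply: (mulfI nzS); rewrite mulrCA e ec mulrCA.
have [d ed] := IH c X ne' cop' e'.
by exists d; rewrite ec ed mulrA.
Qed.

Lemma ell_involves (S : {set 'I_n}) (i : 'I_n) : i \in S -> involves (ell S) i.
Proof.
move=> iS; exists U_(i)%MM; split; last by rewrite mnm1E eqxx.
rewrite /ell raddf_sum /=.
rewrite (eq_bigr (fun k => ((k == i)%:R : rat))) ?sum_ind ?iS ?oner_eq0 //.
by move=> k _; rewrite mcoeffXU.
Qed.

Lemma irr_involves (p : P) (S : {set 'I_n}) (i : 'I_n) : S != set0 -> mirreducible p -> mdvd p (ell S) ->
  involves p i -> i \in S.
Proof.
move=> neS [nzp nup irr] [c ec] [m [pm mi]].
have [nzS nuS prS] := ell_prime neS.
have : mdvd (ell S) (p * c) by rewrite -ec; apply: mdvd_refl.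
case/prS => -[d ed]; last first.
  have : p * d = 1.
    by apply: (mulfI nzS); rewrite mulr1 {2}ec ed mulrCA.
  by move/mul1_unit; rewrite (negbTE nup).
have du : d \is a GRing.unit.
  apply: (@mul1_unit d c); apply: (mulfI nzS).
  by rewrite mulr1 {2}ec ed mulrA.
case/andP: du => /eqP dC _.
move: pm; rewrite ed dC mulrC mcoeffCM mulf_eq0 negb_or => /andP[_].
rewrite /ell raddf_sum /=.
apply: contraR => iS; rewrite big1 // => k kS.
rewrite mcoeffX; case: eqP => // em.
by move: mi; rewrite -em mnm1E; case: eqP kS iS => // -> ->.
Qed.

End Alg.

Local Close Scope ring_scope.


Section Comb.
Variables (n : nat) (E : rel 'I_n) (h : 'I_n -> nat).
Hypothesis sh : is_shrub E h.

Lemma symE : forall i j, E i j = E j i. Proof. by case: sh. Qed.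
Lemma ax1 : forall i j, E i j -> h i = (h j).+1 \/ h j = (h i).+1.
Proof. by case: sh => _ [_ []]. Qed.
Lemma ax2 : forall i, (0 < h i)%N -> exists j, covers E h i j.
Proof. by case: sh => _ [_ [_ []]]. Qed.

Lemma covers_E z x : covers E h z x -> E z x.
Proof. by case/andP; rewrite symE. Qed.
Lemma covers_h z x : covers E h z x -> h z = (h x).+1.
Proof. by case/andP => _ /eqP. Qed.

Lemma exists_desc z : exists p, desc_path E h setT z p && (h (last z p) == 0%N).
Proof.
move: {2}(h z) (leqnn (h z)) => k; elim: k z => [|k IH] z hz.
  by exists [::]; rewrite /desc_path /= in_setT /=; move: hz; rewrite leqn0.
case hz0: (h z) => [|m].
  by exists [::]; rewrite /desc_path /= in_setT /= hz0.
have [w cw] : exists j, covers E h z j by apply: ax2; rewrite hz0.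
have hw : (h w <= k)%N by move: hz; rewrite (covers_h cw).
have [p /andP[hp lp]] := IH w hw.
exists (w :: p); rewrite /= lp andbT.
by move: hp; rewrite /desc_path /= !in_setT cw.
Qed.

Lemma path_prop (V : {set 'I_n}) z p y : desc_path E h V z p -> y \in z :: p ->
  [/\ connect E z y, (h y <= h z)%N & (h y = h z -> y = z)].
Proof.
elim: p z => [|x p IH] z.
  by move=> _; rewrite inE => /eqP ->; split => //; exact: connect0.
rewrite /desc_path /= => /andP[zV /andP[/and3P[_ xV czx] hp]].
rewrite in_cons => /orP[/eqP -> |yp]; first by split => //; exact: connect0.
have dxp : desc_path E h V x p by rewrite /desc_path xV hp.
have [cxy hyx _] := IH x dxp yp.
have hzx := covers_h czx.
split.
- by apply: connect_trans cxy; apply: connect1; apply: covers_E.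
- by rewrite hzx; apply: leqW.
- by move=> e; move: hyx; rewrite e hzx ltnn.
Qed.

Lemma gen_reach (V S : {set 'I_n}) z p : z \in gen E h V S -> desc_path E h V z p ->
  h (last z p) = 0%N ->
  exists2 y, y \in S & [/\ connect E z y, (h y <= h z)%N & (h y = h z -> y = z)].
Proof.
rewrite /gen inE => /andP[_ /asboolP H] dp hl.
have /hasP[y yp yS] := H p dp hl.
by exists y => //; apply: (path_prop dp).
Qed.

Lemma sub_gen (V S : {set 'I_n}) x : S \subset V -> x \in S -> x \in gen E h V S.
Proof.
move=> SV xS; rewrite /gen inE (subsetP SV _ xS) /=.
by apply/asboolP => p _ _; rewrite /= xS.
Qed.

Lemma above_gen (S : {set 'I_n}) z x : covers E h z x -> covered E h z \subset S ->
  z \in gen E h setT S.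
Proof.
move=> czx sub; rewrite /gen inE in_setT /=; apply/asboolP => -[|w p].
  by move=> _ /= h0; move: (covers_h czx); rewrite h0.
rewrite /desc_path /= => /andP[_ /andP[/and3P[_ _ czw] _]] _.
by rewrite (subsetP sub w) ?orbT // inE.
Qed.

Lemma gen_setT_reach (S : {set 'I_n}) z : z \in gen E h setT S ->
  exists2 y, y \in S & [/\ connect E z y, (h y <= h z)%N & (h y = h z -> y = z)].
Proof.
move=> zg; have [p /andP[dp /eqP hl]] := exists_desc z.
exact: gen_reach zg dp hl.
Qed.

Definition rclass (v0 : 'I_n) := [set w | ramified E h w && (covered E h w == covered E h v0)].

Lemma Ram_inv (r : {set 'I_n}) : r \in Ram E h -> exists2 v0, ramified E h v0 & r = rclass v0.
Proof. by case/imsetP => v0; rewrite inE => rv ->; exists v0. Qed.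

Lemma rclass_in v0 : ramified E h v0 -> rclass v0 \in Ram E h.
Proof. by move=> rv; apply/imsetP; exists v0; rewrite ?inE. Qed.

Lemma rminus_rclass v0 : ramified E h v0 -> rminus E h (rclass v0) = covered E h v0.
Proof.
move=> rv; apply/setP => x; apply/bigcupP/idP => [[v] | xv].
  by rewrite inE => /andP[_ /eqP ->].
by exists v0; rewrite // inE rv eqxx.
Qed.

Lemma v0_rclass v0 : ramified E h v0 -> v0 \in rclass v0.
Proof. by move=> rv; rewrite inE rv eqxx. Qed.

Lemma covered_covers v x : x \in covered E h v -> covers E h v x.
Proof. by rewrite inE. Qed.

Lemma ramified2 v : ramified E h v ->
  exists b b', [/\ b \in covered E h v, b' \in covered E h v & b != b'].
Proof. by move/card_gt1P. Qed.

Definition Aset i := gen E h setT [set i].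
Definition Bset (r : {set 'I_n}) := gen E h setT (rminus E h r).
Definition Cset (r : {set 'I_n}) := gen E h (~: gen E h setT r) (rminus E h r).

Lemma X_notin_gen v0 x : ramified E h v0 -> x \in covered E h v0 ->
  x \notin gen E h setT (rclass v0).
Proof.
move=> rv xv; have [p /andP[dp /eqP hl]] := exists_desc x.
rewrite /gen inE in_setT andTb; apply/asboolPn => H.
case/hasP: (H p dp hl) => w wp.
rewrite !inE => /andP[_ /eqP ew].
have [_ hwx _] := path_prop dp wp.
have xw : x \in covered E h w by rewrite ew.
by move: hwx; rewrite (covers_h (covered_covers xw)) ltnn.
Qed.

Lemma X_sub_C v0 : ramified E h v0 -> covered E h v0 \subset Cset (rclass v0).
Proof.
move=> rv; apply/subsetP => x xv; rewrite /Cset rminus_rclass //.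
apply: sub_gen => //; apply/subsetP => y yv; rewrite inE.
exact: X_notin_gen.
Qed.

Lemma X_sub_B v0 : ramified E h v0 -> covered E h v0 \subset Bset (rclass v0).
Proof.
move=> rv; apply/subsetP => x xv; rewrite /Bset rminus_rclass //.
by apply: sub_gen => //; apply/subsetT.
Qed.

Lemma desc_compl (r : {set 'I_n}) y p : desc_path E h setT y p -> h (last y p) = 0%N ->
  ~~ has (mem r) (y :: p) -> desc_path E h (~: gen E h setT r) y p.
Proof.
have notin z q : desc_path E h setT z q -> h (last z q) = 0%N ->
    ~~ has (mem r) (z :: q) -> z \in ~: gen E h setT r.
  move=> dq hq nh; rewrite inE /gen inE in_setT andTb.
  by apply/asboolPn => H; move: nh; rewrite H.
elim: p y => [|x p IH] y dp hl nh.
  by rewrite /desc_path /= (notin y [::]).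
have yV := notin _ _ dp hl nh.
move: (dp) hl nh; rewrite /desc_path /= => /andP[_ /andP[/and3P[_ _ cyx] hp]] hl.
rewrite negb_or => /andP[ny nh].
have dx : desc_path E h setT x p by rewrite /desc_path in_setT.
have := IH x dx hl nh; rewrite /desc_path => /andP[xV hp'].
by rewrite yV xV cyx hp'.
Qed.

Lemma C_reach v0 z : ramified E h v0 -> z \in Cset (rclass v0) ->
  exists2 y, y \in covered E h v0 &
    [/\ connect E z y, (h y <= h z)%N & (h y = h z -> y = z)].
Proof.
move=> rv zC; have := zC; rewrite /Cset inE => /andP[].
rewrite inE /gen inE in_setT andTb => /asboolPn /existsNP [p].
move/not_implyP => [dp /not_implyP [hl nh]] _.
have dV := desc_compl dp hl (introN idP nh).
rewrite -(rminus_rclass rv); exact: gen_reach zC dV hl.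
Qed.

Lemma XH v0 x : x \in covered E h v0 -> h v0 = (h x).+1.
Proof. by move/covered_covers/covers_h. Qed.

Lemma A_reach i z : z \in Aset i ->
  [/\ connect E z i, (h i <= h z)%N & (h i = h z -> i = z)].
Proof. by case/gen_setT_reach => y; rewrite inE => /eqP ->. Qed.

Lemma B_reach v1 z : ramified E h v1 -> z \in Bset (rclass v1) ->
  exists2 y, y \in covered E h v1 &
    [/\ connect E z y, (h y <= h z)%N & (h y = h z -> y = z)].
Proof. by move=> rv; rewrite /Bset rminus_rclass //; apply: gen_setT_reach. Qed.

Lemma A_neq_C i v0 : ramified E h v0 -> Aset i != Cset (rclass v0).
Proof.
move=> rv; apply/negP => /eqP e.
have [b [b' [bX b'X bb']]] := ramified2 rv.
have bA : b \in Aset i by rewrite e; apply: (subsetP (X_sub_C rv)).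
have b'A : b' \in Aset i by rewrite e; apply: (subsetP (X_sub_C rv)).
have iC : i \in Cset (rclass v0) by rewrite -e /Aset; apply: sub_gen; rewrite ?subsetT ?inE.
have [y yX [_ hyi _]] := C_reach rv iC.
have [_ hib eib] := A_reach bA.
have [_ hib' eib'] := A_reach b'A.
have hyb : h y = h b by apply: succn_inj; rewrite -(XH yX) -(XH bX).
have hyb' : h y = h b' by apply: succn_inj; rewrite -(XH yX) -(XH b'X).
have e1 : i = b by apply: eib; apply/eqP; rewrite eqn_leq hib -hyb hyi.
have e2 : i = b' by apply: eib'; apply/eqP; rewrite eqn_leq hib' -hyb' hyi.
by move: bb'; rewrite -e1 -e2 eqxx.
Qed.

Lemma B_neq_C v0 v1 : ramified E h v0 -> ramified E h v1 ->
  Bset (rclass v1) != Cset (rclass v0).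
Proof.
move=> rv0 rv1; apply/negP => /eqP e.
have [x [_ [xX _ _]]] := ramified2 rv0.
have xB : x \in Bset (rclass v1) by rewrite e; apply: (subsetP (X_sub_C rv0)).
have [x' x'X [_ hx'x _]] := B_reach rv1 xB.
have x'C : x' \in Cset (rclass v0) by rewrite -e; apply: (subsetP (X_sub_B rv1)).
have [x'' x''X [_ hx''x' _]] := C_reach rv0 x'C.
have hx''x : h x'' = h x by apply: succn_inj; rewrite -(XH x''X) -(XH xX).
have hxx' : h x' = h x by apply/eqP; rewrite eqn_leq hx'x -hx''x hx''x'.
have sub : covered E h v0 \subset covered E h v1.
  apply/subsetP => y yX.
  have yB : y \in Bset (rclass v1) by rewrite e; apply: (subsetP (X_sub_C rv0)).
  have [y' y'X [_ _ ey]] := B_reach rv1 yB.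
  rewrite -ey //.
  have hyx : h y = h x by apply: succn_inj; rewrite -(XH yX) -(XH xX).
  have hy'x' : h y' = h x' by apply: succn_inj; rewrite -(XH y'X) -(XH x'X).
  by rewrite hy'x' hxx' hyx.
have v0B : v0 \in Bset (rclass v1).
  by rewrite /Bset rminus_rclass //; apply: above_gen (covered_covers xX) sub.
move: v0B; rewrite e /Cset inE => /andP[]; rewrite inE => /negP nv _; apply: nv.
by apply: sub_gen; rewrite ?subsetT ?v0_rclass.
Qed.

Lemma A_conn i y : y \in Aset i -> connect E y i.
Proof. by case/A_reach. Qed.

Lemma B_conn v0 y : ramified E h v0 -> y \in Bset (rclass v0) -> connect E y v0.
Proof.
move=> rv yB; have [x xX [cyx _ _]] := B_reach rv yB.
apply: connect_trans cyx _; apply: connect1.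
by rewrite symE; apply: covers_E; apply: covered_covers.
Qed.

Definition inDS x y := (exists i, x \in Aset i /\ y \in Aset i) \/
  exists v0, [/\ ramified E h v0, x \in Bset (rclass v0) & y \in Bset (rclass v0)].

Lemma inDS_sym x y : inDS x y -> inDS y x.
Proof. by case=> [[i [? ?]]|[v0 [? ? ?]]]; [left; exists i | right; exists v0]. Qed.

Lemma cov_set b a : covers E h b a -> inDS a b.
Proof.
move=> cba; case: (boolP (ramified E h b)) => rb.
  right; exists b; split => //; first by apply: (subsetP (X_sub_B rb)); rewrite inE.
  by rewrite /Bset rminus_rclass //; apply: above_gen (cba) _.
left; exists a; split; first by apply: sub_gen; rewrite ?subsetT ?inE.
apply: above_gen (cba) _; apply/subsetP => x xb; rewrite inE.
apply/negPn/negP => xa; move: rb; rewrite /ramified; apply/negP/negPn.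
by apply/card_gt1P; exists x, a; rewrite xb xa inE cba.
Qed.

Lemma edge_set a b : E a b -> inDS a b.
Proof.
move=> eab; case: (ax1 eab) => e.
  apply: inDS_sym; apply: cov_set; by rewrite /covers symE eab e eqxx.
by apply: cov_set; rewrite /covers eab e eqxx.
Qed.

End Comb.

Local Open Scope ring_scope.

Local Open Scope ring_scope.

Section Main.
Variables (n : nat) (E : rel 'I_n) (h : 'I_n -> nat).
Hypothesis sh : is_shrub E h.

Definition DL := [seq Aset E h i | i <- index_enum 'I_n] ++
                 [seq Bset E h r | r <- enum (Ram E h)].
Definition NL := [seq Cset E h r | r <- enum (Ram E h)].

Lemma usumE (S : {set 'I_n}) : usum S = (ell S)%:F.
Proof. by rewrite /usum /ell rmorph_sum. Qed.

Lemma fP_eq : fP E h = (\prod_(S <- NL) ell S)%:F / (\prod_(S <- DL) ell S)%:F.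
Proof.
rewrite /fP /NL /DL big_cat !big_map !big_enum /=.
under eq_bigr do rewrite usumE.
under [X in _ * X]eq_bigr do rewrite !usumE.
rewrite big_split /= prodfV -!rmorph_prod /Aset /Bset /Cset rmorphM invfM.
by rewrite mulrCA.
Qed.

Lemma mem_DL S : S \in DL ->
  (exists i, S = Aset E h i) \/ exists2 v0, ramified E h v0 & S = Bset E h (rclass E h v0).
Proof.
rewrite mem_cat => /orP[/mapP[i _ ->]|/mapP[r]]; first by left; exists i.
by rewrite mem_enum => /Ram_inv[v0 rv ->] ->; right; exists v0.
Qed.

Lemma mem_NL S : S \in NL -> exists2 v0, ramified E h v0 & S = Cset E h (rclass E h v0).
Proof. by case/mapP => r; rewrite mem_enum => /Ram_inv[v0 rv ->] ->; exists v0. Qed.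

Lemma neDL : nonemp DL.
Proof.
move=> S /mem_DL[[i ->]|[v0 rv ->]]; apply/set0Pn.
  by exists i; apply: sub_gen; rewrite ?subsetT ?inE.
have [x [_ [xX _ _]]] := ramified2 rv.
by exists x; apply: (subsetP (X_sub_B rv)).
Qed.

Lemma neNL : nonemp NL.
Proof.
move=> S /mem_NL[v0 rv ->]; apply/set0Pn.
have [x [_ [xX _ _]]] := ramified2 rv.
by exists x; apply: (subsetP (X_sub_C sh rv)).
Qed.

Lemma NL_DL S T : S \in NL -> T \in DL -> S != T.
Proof.
case/mem_NL => v0 rv ->; case/mem_DL => [[i ->]|[v1 rv1 ->]]; rewrite eq_sym.
  exact: A_neq_C.
exact: B_neq_C.
Qed.

Lemma D_neq0 : \prod_(S <- DL) ell S != 0.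
Proof. by rewrite prodf_seq_neq0; apply/allP => S SD; apply: ell_neq0; apply: neDL. Qed.

Lemma lowest : lowest_terms (fP E h) (\prod_(S <- NL) ell S) (\prod_(S <- DL) ell S).
Proof.
split; [exact: D_neq0 | exact: fP_eq |].
exact: (coprime_prods neNL neDL NL_DL).
Qed.

Lemma edge_rel a b : E a b -> denom_rel (fP E h) a b.
Proof.
move=> eab; exists (\prod_(S <- NL) ell S), (\prod_(S <- DL) ell S); split; first exact: lowest.
have [S SD [aS bS]] : exists2 S, S \in DL & a \in S /\ b \in S.
  case: (edge_set sh eab) => [[i [ai bi]]|[v0 [rv ai bi]]].
    by exists (Aset E h i); rewrite ?mem_cat ?map_f ?mem_index_enum.
  exists (Bset E h (rclass E h v0)) => //.
  by rewrite mem_cat orbC map_f // mem_enum rclass_in.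
exists (ell S); split.
- exact: ell_irr (neDL SD).
- by rewrite (big_rem _ SD) /=; apply: mdvd_mulr; apply: mdvd_refl.
- exact: ell_involves.
- exact: ell_involves.
Qed.

Lemma rel_conn a b : denom_rel (fP E h) a b -> connect E a b.
Proof.
move=> [N' [D' [[nzD' eqf cop] [p [irr pD' ia ib]]]]].
have e : N' * \prod_(S <- DL) ell S = (\prod_(S <- NL) ell S) * D'.
  move: eqf; rewrite fP_eq => /eqP.
  rewrite eqr_div ?tofrac_eq0 ?D_neq0 // -!rmorphM tofrac_eq => /eqP ->.
  by rewrite mulrC.
have dD := lowest_dvd neDL cop e.
have [S SD pS] := irr_dvd_prod irr neDL (mdvd_trans pD' dD).
have aS := irr_involves (neDL SD) irr pS ia.
have bS := irr_involves (neDL SD) irr pS ib.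
have csym : connect_sym E := sym_connect_sym (symE sh).
case/mem_DL: SD aS bS => [[i ->]|[v0 rv ->]] aS bS.
  by apply: connect_trans (A_conn sh aS) _; rewrite csym; exact: (A_conn sh bS).
by apply: connect_trans (B_conn sh rv aS) _; rewrite csym; exact: (B_conn sh rv bS).
Qed.

End Main.

Local Close Scope ring_scope.

Theorem mainTheorem13 (n : nat) (E : rel 'I_n) (h : 'I_n -> nat) :
  is_shrub E h ->
  forall i j : 'I_n, connect E i j <-> pi_rel (fP E h) i j.
Proof.
move=> sh i j; split.
  move/connectP => [p pth ->]; elim: p i pth => [|x p IH] a /=.
    by move=> _; apply: rst_refl.
  move=> /andP[eax pth]; apply: rst_trans (IH x pth).
  by apply: rst_step; apply: edge_rel.
elim => [a b|a|a b _ IH|a b c _ IH1 _ IH2].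
- exact: rel_conn.
- exact: connect0.
- by rewrite (sym_connect_sym (symE sh)).
- exact: connect_trans IH1 IH2.
Qed.
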